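(* Let $c>0$, $\alpha>0$ and $F\in C^2(\mathbb{R}\times[0,\infty))$. Let $w(x,t)$ be the solution of the Cauchy problem for the forced wave equation $$\frac{\partial^2 w}{\partial t^2}= c^2 \frac{\partial^2 w}{\partial x^2}+F(x,t),\qquad w(x,0)=0,\qquad \frac{\partial w}{\partial t}(x,0)=0,$$ i.e. $w(x,t)=\frac{1}{2c}\int_0^t ds\int_{x-c(t-s)}^{x+c(t-s)}F(y,s)\,dy$. Define $$v(x,t)=\frac{2}{B(\alpha,\frac12)}\int_0^1(1-u^2)^{\alpha-1}\,w(x,ut)\,du .$$ Then $v$ solves the non-homogeneous Euler–Poisson–Darboux problem $$\frac{\partial^2 v}{\partial t^2}+\frac{2\alpha}{t}\frac{\partial v}{\partial t}= c^2 \frac{\partial^2 v}{\partial x^2}+\frac{2}{B(\alpha,\frac12)}\int_0^1(1-u^2)^{\alpha-1}F(x,ut)\,du,\quad t>0,$$ with $v(x,0)=0$ and $\frac{\partial v}{\partial t}(x,0)=0$.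
   Context: $B(a,b)=\Gamma(a)\Gamma(b)/\Gamma(a+b)$ denotes the Beta function. *)

(* Defs.v *)
From Stdlib Require Import Reals ClassicalEpsilon.
Open Scope R_scope.

Definition is_RInt (f : R -> R) (a b I : R) : Prop :=
  exists pr : Riemann_integrable f a b, RiemannInt pr = I.

(* Total Riemann integral (value irrelevant when f is not integrable). *)
Definition RInt (f : R -> R) (a b : R) : R :=
  epsilon (inhabits 0) (fun I => is_RInt f a b I).

Definition is_impint (f : R -> R) (a b l : R) : Prop :=
  (forall p q, a < p -> p <= q -> q < b -> exists I, is_RInt f p q I) /\
  (forall eps, 0 < eps -> exists d, 0 < d /\
     forall p q I, a < p -> p < a + d -> b - d < q -> q < b -> p <= q ->
       is_RInt f p q I -> Rabs (I - l) < eps).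

Definition ImpInt (f : R -> R) (a b : R) : R :=
  epsilon (inhabits 0) (fun l => is_impint f a b l).

Definition Beta (a b : R) : R :=
  ImpInt (fun s => Rpower s (a - 1) * Rpower (1 - s) (b - 1)) 0 1.

Definition deriv_within (D : R -> Prop) (f : R -> R) (x l : R) : Prop :=
  forall eps, 0 < eps -> exists d, 0 < d /\
    forall h, h <> 0 -> Rabs h < d -> D (x + h) ->
      Rabs ((f (x + h) - f x) / h - l) < eps.

Definition half_line (t : R) : Prop := 0 <= t.

Definition cont_half (g : R -> R -> R) : Prop :=
  forall x t, 0 <= t -> forall eps, 0 < eps -> exists d, 0 < d /\
    forall x' t', 0 <= t' -> Rabs (x' - x) < d -> Rabs (t' - t) < d ->
      Rabs (g x' t' - g x t) < eps.

Definition C2_half (F : R -> R -> R) : Prop :=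
  exists F1 F2 F11 F12 F21 F22 : R -> R -> R,
    (forall x t, 0 <= t ->
       derivable_pt_lim (fun y => F y t) x (F1 x t) /\
       deriv_within half_line (fun s => F x s) t (F2 x t) /\
       derivable_pt_lim (fun y => F1 y t) x (F11 x t) /\
       deriv_within half_line (fun s => F1 x s) t (F12 x t) /\
       derivable_pt_lim (fun y => F2 y t) x (F21 x t) /\
       deriv_within half_line (fun s => F2 x s) t (F22 x t)) /\
    cont_half F /\ cont_half F1 /\ cont_half F2 /\
    cont_half F11 /\ cont_half F12 /\ cont_half F21 /\ cont_half F22.

Definition wave_sol (c : R) (F : R -> R -> R) (x t : R) : R :=
  / (2 * c) * RInt (fun s => RInt (fun y => F y s) (x - c * (t - s)) (x + c * (t - s))) 0 t.

Definition epd_sol (c alpha : R) (F : R -> R -> R) (x t : R) : R :=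
  2 / Beta alpha (1/2) *
  ImpInt (fun u => Rpower (1 - u ^ 2) (alpha - 1) * wave_sol c F x (u * t)) 0 1.

(* Main.v *)
Require Import Defs.
From Stdlib Require Import Reals Lra Lia FunctionalExtensionality ClassicalEpsilon.
From Coquelicot Require Import Coquelicot.
Open Scope R_scope.


Lemma iru (f : R -> R) a b l : is_RInt f a b l -> RInt f a b = l.
Proof. intros H. exact (is_RInt_unique f a b l H). Qed.
Lemma rc (f : R -> R) a b : ex_RInt f a b -> is_RInt f a b (RInt f a b).
Proof. intros H. exact (RInt_correct f a b H). Qed.

Lemma tr1 f a b I : Defs.is_RInt f a b I -> is_RInt f a b I.
Proof.
  intros [pr Hpr]. pose proof (ex_RInt_Reals_1 f a b pr) as ex.
  rewrite <- Hpr, <- (RInt_Reals f a b pr). exact (RInt_correct f a b ex).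
Qed.

Lemma tr2 f a b I : is_RInt f a b I -> Defs.is_RInt f a b I.
Proof.
  intros H. assert (ex: ex_RInt f a b) by (exists I; auto).
  pose proof (ex_RInt_Reals_0 f a b ex) as pr. exists pr.
  rewrite <- RInt_Reals. apply iru. auto.
Qed.

Lemma DRInt_eq f a b : ex_RInt f a b -> Defs.RInt f a b = RInt f a b.
Proof.
  intros ex. unfold Defs.RInt.
  assert (H : exists I, Defs.is_RInt f a b I).
  { exists (RInt f a b). apply tr2. exact (RInt_correct _ _ _ ex). }
  pose proof (epsilon_spec (inhabits 0) _ H) as H2.
  apply tr1 in H2. symmetry. apply iru. exact H2.
Qed.

Definition imp (f : R -> R) (l : R) : Prop :=
 (forall p q, 0 < p -> p <= q -> q < 1 -> ex_RInt f p q) /\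
 (forall eps, 0 < eps -> exists d, 0 < d /\ forall p q, 0 < p -> p < d -> 1 - d < q -> q < 1 -> p <= q -> Rabs (RInt f p q - l) < eps).

Lemma imp_is f l : imp f l -> is_impint f 0 1 l.
Proof.
  intros [H1 H2]. split.
  - intros p q hp hpq hq. exists (RInt f p q). apply tr2. exact (RInt_correct _ _ _ (H1 p q hp hpq hq)).
  - intros eps he. destruct (H2 eps he) as [d [hd Hd]]. exists d. split; auto.
    intros p q I hp hp2 hq hq2 hpq HI. apply tr1 in HI. apply iru in HI.
    rewrite <- HI. apply Hd; lra.
Qed.

Lemma is_imp f l : is_impint f 0 1 l -> imp f l.
Proof.
  intros [H1 H2]. split.
  - intros p q hp hpq hq. destruct (H1 p q hp hpq hq) as [I HI]. exists I. apply tr1. auto.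
  - intros eps he. destruct (H2 eps he) as [d [hd Hd]]. exists d. split; auto.
    intros p q hp hp2 hq hq2 hpq. apply (Hd p q); try lra.
    destruct (H1 p q hp hpq hq2) as [I HI]. apply tr2. apply rc.
    exists I. apply tr1. auto.
Qed.

Lemma abs_lt_elim x e : Rabs x < e -> -e < x < e.
Proof. intros H. unfold Rabs in H. destruct (Rcase_abs x); lra. Qed.
Lemma abs_le_elim x e : Rabs x <= e -> -e <= x <= e.
Proof. intros H. unfold Rabs in H. destruct (Rcase_abs x); lra. Qed.
Lemma abs_lt_intro x e : -e < x < e -> Rabs x < e.
Proof. intros H. unfold Rabs. destruct (Rcase_abs x); lra. Qed.
Lemma abs_le_intro x e : -e <= x <= e -> Rabs x <= e.
Proof. intros H. unfold Rabs. destruct (Rcase_abs x); lra. Qed.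

Lemma corner d : 0 < d -> exists p q, 0 < p /\ p < d /\ 1 - d < q /\ q < 1 /\ p <= q.
Proof.
  intros hd. exists (Rmin d (1/2) / 2), (1 - Rmin d (1/2) / 2).
  pose proof (Rmin_l d (1/2)). pose proof (Rmin_r d (1/2)).
  assert (0 < Rmin d (1/2)) by (apply Rmin_pos; lra). lra.
Qed.

Lemma imp_unique f l1 l2 : imp f l1 -> imp f l2 -> l1 = l2.
Proof.
  intros [_ H1] [_ H2]. destruct (Req_dec l1 l2) as [e|ne]; auto. exfalso.
  set (eps := Rabs (l1 - l2) / 2).
  assert (he : 0 < eps). { unfold eps. assert (0 < Rabs (l1 - l2)) by (apply Rabs_pos_lt; lra). lra. }
  destruct (H1 eps he) as [d1 [hd1 D1]]. destruct (H2 eps he) as [d2 [hd2 D2]].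
  destruct (corner (Rmin d1 d2)) as [p [q [a [b [c [d e]]]]]]. apply Rmin_pos; auto.
  pose proof (Rmin_l d1 d2). pose proof (Rmin_r d1 d2).
  specialize (D1 p q). specialize (D2 p q).
  assert (X1 := abs_lt_elim _ _ (D1 ltac:(lra) ltac:(lra) ltac:(lra) ltac:(lra) ltac:(lra))).
  assert (X2 := abs_lt_elim _ _ (D2 ltac:(lra) ltac:(lra) ltac:(lra) ltac:(lra) ltac:(lra))).
  unfold eps in *. unfold Rabs in *. destruct (Rcase_abs (l1 - l2)); lra.
Qed.

Lemma ImpInt_eq f l : imp f l -> ImpInt f 0 1 = l.
Proof.
  intros H. unfold ImpInt.
  assert (E : exists l, is_impint f 0 1 l) by (exists l; apply imp_is; auto).
  pose proof (epsilon_spec (inhabits 0) _ E) as H2. apply is_imp in H2.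
  eapply imp_unique; eauto.
Qed.

Lemma isR_lin (f g : R -> R) a b If Ig k1 k2 : is_RInt f a b If -> is_RInt g a b Ig ->
  is_RInt (fun u => k1 * f u + k2 * g u) a b (k1*If + k2*Ig).
Proof.
  intros H1 H2.
  apply (is_RInt_plus (V:=R_NormedModule) (fun u => k1 * f u) (fun u => k2 * g u));
  apply (is_RInt_scal (V:=R_NormedModule)); auto.
Qed.

Lemma isR_scal (f : R -> R) a b If k : is_RInt f a b If -> is_RInt (fun u => k * f u) a b (k*If).
Proof. intros H. apply (is_RInt_scal (V:=R_NormedModule)); auto. Qed.

Lemma isR_norm (f g : R -> R) a b lf lg : a <= b -> (forall x, a <= x <= b -> Rabs (f x) <= g x) ->
  is_RInt f a b lf -> is_RInt g a b lg -> Rabs lf <= lg.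
Proof. intros. apply (norm_RInt_le (V:=R_NormedModule) f g a b lf lg); auto. Qed.

Lemma isR_chasles (f : R -> R) a b c l1 l2 : is_RInt f a b l1 -> is_RInt f b c l2 -> is_RInt f a c (l1 + l2).
Proof. intros. apply (is_RInt_Chasles (V:=R_NormedModule) f a b c l1 l2); auto. Qed.

Lemma isR_swap (f : R -> R) a b l : is_RInt f a b l -> is_RInt f b a (- l).
Proof. intros. apply (is_RInt_swap (V:=R_NormedModule)); auto. Qed.

Lemma isR_ext (f g : R -> R) a b l : (forall x, Rmin a b < x < Rmax a b -> f x = g x) -> is_RInt f a b l -> is_RInt g a b l.
Proof. intros. apply (is_RInt_ext (V:=R_NormedModule) f g); auto. Qed.

Lemma imp_ext f g l : (forall u, 0 < u < 1 -> f u = g u) -> imp f l -> imp g l.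
Proof.
  intros E [H1 H2]. split.
  - intros p q hp hpq hq. destruct (H1 p q hp hpq hq) as [I HI]. exists I.
    eapply isR_ext; [|exact HI]. intros x hx. apply E.
    rewrite Rmin_left in hx by lra. rewrite Rmax_right in hx by lra. lra.
  - intros eps he. destruct (H2 eps he) as [d [hd D]]. exists d. split; auto.
    intros p q hp hp2 hq hq2 hpq.
    rewrite <- (RInt_ext f g). apply D; auto.
    intros x hx. apply E. rewrite Rmin_left in hx by lra. rewrite Rmax_right in hx by lra. lra.
Qed.

Lemma imp_lin f g l1 l2 k1 k2 : imp f l1 -> imp g l2 -> imp (fun u => k1 * f u + k2 * g u) (k1*l1 + k2*l2).
Proof.
  intros [A1 B1] [A2 B2]. split.
  - intros p q hp hpq hq. exists (k1 * RInt f p q + k2 * RInt g p q).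
    apply isR_lin; apply rc; auto.
  - intros eps he. set (e' := eps / (Rabs k1 + Rabs k2 + 1)).
    assert (hk : 0 < Rabs k1 + Rabs k2 + 1) by (pose proof (Rabs_pos k1); pose proof (Rabs_pos k2); lra).
    assert (he' : 0 < e') by (unfold e'; apply Rdiv_lt_0_compat; auto).
    destruct (B1 e' he') as [d1 [hd1 D1]]. destruct (B2 e' he') as [d2 [hd2 D2]].
    exists (Rmin d1 d2). split. apply Rmin_pos; auto.
    intros p q hp hp2 hq hq2 hpq. pose proof (Rmin_l d1 d2). pose proof (Rmin_r d1 d2).
    rewrite (iru _ _ _ _ (isR_lin f g p q _ _ k1 k2 (rc _ _ _ (A1 p q hp hpq hq2)) (rc _ _ _ (A2 p q hp hpq hq2)))).
    specialize (D1 p q hp ltac:(lra) ltac:(lra) hq2 hpq). specialize (D2 p q hp ltac:(lra) ltac:(lra) hq2 hpq).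
    replace (k1 * RInt f p q + k2 * RInt g p q - (k1 * l1 + k2 * l2)) with
      (k1 * (RInt f p q - l1) + k2 * (RInt g p q - l2)) by ring.
    eapply Rle_lt_trans. apply Rabs_triang. rewrite !Rabs_mult.
    assert (Rabs k1 * Rabs (RInt f p q - l1) <= Rabs k1 * e') by (apply Rmult_le_compat_l; [apply Rabs_pos|lra]).
    assert (Rabs k2 * Rabs (RInt g p q - l2) <= Rabs k2 * e') by (apply Rmult_le_compat_l; [apply Rabs_pos|lra]).
    assert (E : (Rabs k1 + Rabs k2 + 1) * e' = eps) by (unfold e'; field; lra).
    nra.
Qed.

Lemma imp_bound f phi l K M : 0 <= M -> (forall u, 0 < u < 1 -> Rabs (f u) <= M * phi u) ->
  imp f l -> imp phi K -> Rabs l <= M * K.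
Proof.
  intros hM Hb [A1 B1] [A2 B2].
  destruct (Rle_dec (Rabs l) (M*K)) as [h|h]; auto. exfalso.
  set (eps := (Rabs l - M*K) / (2*(M+1))).
  assert (he : 0 < eps) by (unfold eps; apply Rdiv_lt_0_compat; lra).
  destruct (B1 eps he) as [d1 [hd1 D1]]. destruct (B2 eps he) as [d2 [hd2 D2]].
  destruct (corner (Rmin d1 d2)) as [p [q [a [b [c [d e]]]]]]. apply Rmin_pos; auto.
  pose proof (Rmin_l d1 d2). pose proof (Rmin_r d1 d2).
  specialize (D1 p q a ltac:(lra) ltac:(lra) d e). specialize (D2 p q a ltac:(lra) ltac:(lra) d e).
  assert (N : Rabs (RInt f p q) <= M * RInt phi p q).
  { apply (isR_norm f (fun u => M * phi u) p q); auto.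
    intros x hx. apply Hb. lra. apply rc; auto. apply isR_scal. apply rc; auto. }
  apply abs_lt_elim in D1. apply abs_lt_elim in D2.
  assert (Rabs l <= Rabs (RInt f p q) + eps).
  { replace l with (RInt f p q - (RInt f p q - l)) by ring.
    eapply Rle_trans. apply Rabs_triang. rewrite Rabs_Ropp. apply Rplus_le_compat_l.
    apply Rlt_le. apply abs_lt_intro. lra. }
  assert (M * RInt phi p q <= M * (K + eps)) by (apply Rmult_le_compat_l; lra).
  assert (E : 2 * (M+1) * eps = Rabs l - M*K) by (unfold eps; field; lra).
  nra.
Qed.

Lemma nat_small d : 0 < d -> exists N : nat, forall n, (n >= N)%nat -> / (INR n + 3) < d.
Proof.
  intros hd. destruct (archimed_cor1 d hd) as [N [h1 h2]]. exists N. intros n hn.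
  apply lt_INR in h2. simpl in h2. apply le_INR in hn.
  eapply Rle_lt_trans; [|exact h1]. apply Rinv_le_contravar; lra.
Qed.

Lemma imp_exists (f : R -> R) : (forall p q, 0 < p -> p <= q -> q < 1 -> ex_RInt f p q) ->
  (forall eps, 0 < eps -> exists d, 0 < d /\ forall p p' q q', 0 < p < d -> 0 < p' < d ->
      1 - d < q < 1 -> 1 - d < q' < 1 -> Rabs (RInt f p q - RInt f p' q') < eps) ->
  exists l, imp f l.
Proof.
  intros A C.
  set (pn := fun n : nat => / (INR n + 3)).
  assert (hpn : forall n, 0 < pn n <= 1/3).
  { intros n. unfold pn. pose proof (pos_INR n). split. apply Rinv_0_lt_compat; lra.
    replace (1/3) with (/3) by field. apply Rinv_le_contravar; lra. }
  set (s := fun n => RInt f (pn n) (1 - pn n)).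
  assert (Cs : Cauchy_crit s).
  { intros eps he. destruct (C eps he) as [d [hd D]]. destruct (nat_small d hd) as [N HN].
    exists N. intros n m hn hm. unfold Rdist, s.
    pose proof (HN n hn). pose proof (HN m hm). pose proof (hpn n). pose proof (hpn m).
    apply D; fold (pn n) (pn m) in *; lra. }
  destruct (Rcomplete.R_complete s Cs) as [l Hl]. exists l. split; auto.
  intros eps he. destruct (C (eps/2) ltac:(lra)) as [d [hd D]]. exists d. split; auto.
  intros p q hp hp2 hq hq2 hpq.
  destruct (Hl (eps/2) ltac:(lra)) as [N1 HN1]. destruct (nat_small d hd) as [N2 HN2].
  set (n := (N1 + N2)%nat). assert (n >= N1)%nat by lia. assert (n >= N2)%nat by lia.
  specialize (HN1 n H). specialize (HN2 n H0). pose proof (hpn n). unfold Rdist in HN1.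
  assert (X : Rabs (RInt f p q - s n) < eps/2).
  { unfold s. apply D; fold (pn n) in *; lra. }
  replace (RInt f p q - l) with ((RInt f p q - s n) + (s n - l)) by ring.
  eapply Rle_lt_trans. apply Rabs_triang. lra.
Qed.

Lemma cp_c (f : R -> R) x : continuity_pt f x -> continuous f x.
Proof. intros H. apply continuity_pt_filterlim in H. exact H. Qed.
Lemma c_cp (f : R -> R) x : continuous f x -> continuity_pt f x.
Proof. intros H. apply continuity_pt_filterlim. exact H. Qed.

Lemma isR_derive (F f : R -> R) a b : (forall x, Rmin a b <= x <= Rmax a b -> is_derive F x (f x)) ->
  (forall x, Rmin a b <= x <= Rmax a b -> continuous f x) -> is_RInt f a b (F b - F a).
Proof. intros. apply (is_RInt_derive (V:=R_CompleteNormedModule) F f a b); auto. Qed.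

Section Dom.
Variables (B PB : R -> R).
Hypothesis Bc : forall u, 0 < u < 1 -> continuous B u.
Hypothesis PBd : forall u, 0 < u < 1 -> is_derive PB u (B u).
Hypothesis PB0 : forall eps, 0 < eps -> exists d, 0 < d /\ forall x y, 0 < x < d -> 0 < y < d -> Rabs (PB x - PB y) < eps.
Hypothesis PB1 : forall eps, 0 < eps -> exists d, 0 < d /\ forall x y, 1 - d < x < 1 -> 1 - d < y < 1 -> Rabs (PB x - PB y) < eps.

Lemma ex_any (f : R -> R) : (forall p q, 0 < p -> p <= q -> q < 1 -> ex_RInt f p q) ->
  forall x y, 0 < x < 1 -> 0 < y < 1 -> ex_RInt f x y.
Proof.
  intros A x y hx hy. destruct (Rle_dec x y). apply A; lra.
  apply (ex_RInt_swap (V:=R_NormedModule)). apply A; lra.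
Qed.

Lemma seg_bound (f : R -> R) M : 0 <= M -> (forall p q, 0 < p -> p <= q -> q < 1 -> ex_RInt f p q) ->
  (forall u, 0 < u < 1 -> Rabs (f u) <= M * B u) ->
  forall x y, 0 < x < 1 -> 0 < y < 1 -> Rabs (RInt f x y) <= M * Rabs (PB y - PB x).
Proof.
  intros hM A Hb.
  assert (K : forall x y, 0 < x < 1 -> 0 < y < 1 -> x <= y -> Rabs (RInt f x y) <= M * Rabs (PB y - PB x)).
  { intros x y hx hy hxy.
    eapply Rle_trans. apply (isR_norm f (fun u => M * B u) x y (RInt f x y) (M * (PB y - PB x))); auto.
    intros z hz. apply Hb; lra. apply rc. apply A; lra.
    apply isR_scal. apply isR_derive.
    intros z hz. rewrite Rmin_left in hz by lra. rewrite Rmax_right in hz by lra. apply PBd; lra.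
    intros z hz. rewrite Rmin_left in hz by lra. rewrite Rmax_right in hz by lra. apply Bc; lra.
    apply Rmult_le_compat_l; auto. apply Rle_abs. }
  intros x y hx hy. destruct (Rle_dec x y). apply K; lra.
  rewrite (iru f x y (- RInt f y x)). rewrite Rabs_Ropp. rewrite Rabs_minus_sym. apply K; lra.
  apply isR_swap. apply rc. apply A; lra.
Qed.

Lemma dom_cauchy (f : R -> R) M : 0 <= M -> (forall p q, 0 < p -> p <= q -> q < 1 -> ex_RInt f p q) ->
  (forall u, 0 < u < 1 -> Rabs (f u) <= M * B u) ->
  forall eps, 0 < eps -> exists d, 0 < d /\ forall p p' q q', 0 < p < d -> 0 < p' < d ->
      1 - d < q < 1 -> 1 - d < q' < 1 -> Rabs (RInt f p q - RInt f p' q') < eps.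
Proof.
  intros hM A Hb eps he.
  set (e' := eps / (2 * (M + 1))).
  assert (he' : 0 < e') by (unfold e'; apply Rdiv_lt_0_compat; lra).
  destruct (PB0 e' he') as [d0 [hd0 D0]]. destruct (PB1 e' he') as [d1 [hd1 D1]].
  exists (Rmin (Rmin d0 d1) (1/2)). split. repeat apply Rmin_pos; lra.
  intros p p' q q' hp hp' hq hq'.
  pose proof (Rmin_l (Rmin d0 d1) (1/2)). pose proof (Rmin_r (Rmin d0 d1) (1/2)).
  pose proof (Rmin_l d0 d1). pose proof (Rmin_r d0 d1).
  assert (E : RInt f p q = RInt f p p' + RInt f p' q' + RInt f q' q).
  { apply iru. apply isR_chasles with q'. apply isR_chasles with p'.
    all: apply rc; apply ex_any; auto; lra. }
  rewrite E. replace (RInt f p p' + RInt f p' q' + RInt f q' q - RInt f p' q') with (RInt f p p' + RInt f q' q) by ring.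
  eapply Rle_lt_trans. apply Rabs_triang.
  pose proof (seg_bound f M hM A Hb p p' ltac:(lra) ltac:(lra)).
  pose proof (seg_bound f M hM A Hb q' q ltac:(lra) ltac:(lra)).
  assert (Rabs (PB p' - PB p) < e') by (apply D0; lra).
  assert (Rabs (PB q - PB q') < e') by (apply D1; lra).
  assert (M * Rabs (PB p' - PB p) <= M * e') by (apply Rmult_le_compat_l; lra).
  assert (M * Rabs (PB q - PB q') <= M * e') by (apply Rmult_le_compat_l; lra).
  assert (EE : 2 * (M + 1) * e' = eps) by (unfold e'; field; lra).
  nra.
Qed.

Lemma dom_exists (f : R -> R) M : 0 <= M -> (forall u, 0 < u < 1 -> continuous f u) ->
  (forall u, 0 < u < 1 -> Rabs (f u) <= M * B u) -> exists l, imp f l.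
Proof.
  intros hM Hc Hb.
  assert (A : forall p q, 0 < p -> p <= q -> q < 1 -> ex_RInt f p q).
  { intros p q hp hpq hq. apply (ex_RInt_continuous (V:=R_CompleteNormedModule)).
    intros z hz. rewrite Rmin_left in hz by lra. rewrite Rmax_right in hz by lra. apply Hc; lra. }
  apply imp_exists; auto. apply (dom_cauchy f M); auto.
Qed.
End Dom.

Definition phi a u := Rpower (1 - u^2) (a - 1).
Definition Bf a u := 1 + Rpower (1 - u) (a - 1).
Definition PBf a u := u - Rpower (1 - u) a / a.

Lemma exd_cont (f : R -> R) x : ex_derive f x -> continuous f x.
Proof. intros H. exact (ex_derive_continuous (K:=R_AbsRing) (V:=R_NormedModule) f x H). Qed.

Lemma cp_eps (f : R -> R) x : continuity_pt f x -> forall eps, 0 < eps -> exists d, 0 < d /\ forall y, Rabs (y - x) < d -> Rabs (f y - f x) < eps.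
Proof.
  intros C eps he. destruct (C eps he) as [d [hd D]]. exists d. split; auto.
  intros y hy. destruct (Req_dec y x). subst. rewrite Rminus_eq_0, Rabs_R0. auto.
  apply (D y). split. split. exact I. auto. exact hy.
Qed.

Lemma exp_le x y : x <= y -> exp x <= exp y.
Proof. intros H. destruct (Req_dec x y). subst; lra. apply Rlt_le, exp_increasing; lra. Qed.

Lemma phi_pos a u : 0 < phi a u.
Proof. unfold phi, Rpower. apply exp_pos. Qed.

Lemma phi_le_B a u : 0 < u < 1 -> phi a u <= Bf a u.
Proof.
  intros hu. unfold phi, Bf, Rpower.
  assert (h1 : 0 < 1 - u^2) by nra. assert (h2 : 0 < 1 - u) by lra.
  pose proof (exp_pos ((a - 1) * ln (1 - u))).
  destruct (Rle_dec 1 a).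
  - assert (ln (1 - u^2) <= 0) by (rewrite <- ln_1; apply ln_le; nra).
    assert (exp ((a - 1) * ln (1 - u ^ 2)) <= exp 0) by (apply exp_le; nra).
    rewrite exp_0 in H1. lra.
  - assert (ln (1 - u) <= ln (1 - u^2)) by (apply ln_le; nra).
    assert (exp ((a - 1) * ln (1 - u ^ 2)) <= exp ((a - 1) * ln (1 - u))) by (apply exp_le; nra).
    lra.
Qed.

Lemma phi_der a u : -1 < u < 1 -> ex_derive (phi a) u.
Proof. intros hu. unfold phi, Rpower. auto_derive. nra. Qed.

Lemma phi_cont a u : -1 < u < 1 -> continuous (phi a) u.
Proof. intros hu. apply exd_cont. apply phi_der; auto. Qed.

Lemma Bf_cont a u : u < 1 -> continuous (Bf a) u.
Proof. intros hu. apply exd_cont. unfold Bf, Rpower. auto_derive. lra. Qed.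

Lemma exp_shift a z : 0 < z -> exp ((a - 1) * ln z) = exp (a * ln z) / z.
Proof.
  intros hz. replace ((a - 1) * ln z) with (a * ln z + - ln z) by ring.
  rewrite exp_plus, exp_Ropp, exp_ln by auto. field. lra.
Qed.

Lemma PBf_der a u : 0 < a -> u < 1 -> is_derive (PBf a) u (Bf a u).
Proof.
  intros ha hu. unfold PBf, Bf, Rpower. auto_derive. lra.
  replace (1 + - u) with (1 - u) by ring. rewrite exp_shift by lra. field. lra.
Qed.

Lemma Rpow_small a : 0 < a -> forall eps, 0 < eps -> exists d, 0 < d /\ forall z, 0 < z < d -> Rpower z a < eps.
Proof.
  intros ha eps he. exists (Rpower eps (/a)). split. unfold Rpower; apply exp_pos.
  intros z hz. replace eps with (Rpower (Rpower eps (/a)) a).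
  apply Rlt_Rpower_l; lra. rewrite Rpower_mult. replace (/a * a) with 1 by (field; lra).
  apply Rpower_1; auto.
Qed.

Lemma PB0 a : 0 < a -> forall eps, 0 < eps -> exists d, 0 < d /\ forall x y, 0 < x < d -> 0 < y < d -> Rabs (PBf a x - PBf a y) < eps.
Proof.
  intros ha eps he.
  assert (C : continuity_pt (PBf a) 0) by (apply c_cp; apply exd_cont; eexists; apply PBf_der; lra).
  destruct (cp_eps _ _ C (eps/2) ltac:(lra)) as [d [hd D]]. exists (Rmin d (1/2)). split. apply Rmin_pos; lra.
  pose proof (Rmin_l d (1/2)).
  intros x y hx hy.
  assert (Dx : Rabs (PBf a x - PBf a 0) < eps/2).
  { apply D. rewrite Rminus_0_r, Rabs_right; lra. }
  assert (Dy : Rabs (PBf a y - PBf a 0) < eps/2).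
  { apply D. rewrite Rminus_0_r, Rabs_right; lra. }
  replace (PBf a x - PBf a y) with ((PBf a x - PBf a 0) - (PBf a y - PBf a 0)) by ring.
  eapply Rle_lt_trans. apply Rabs_triang. rewrite Rabs_Ropp. lra.
Qed.

Lemma PB1 a : 0 < a -> forall eps, 0 < eps -> exists d, 0 < d /\ forall x y, 1 - d < x < 1 -> 1 - d < y < 1 -> Rabs (PBf a x - PBf a y) < eps.
Proof.
  intros ha eps he.
  destruct (Rpow_small a ha (eps * a / 3)) as [d [hd D]]. apply Rmult_lt_0_compat. nra. lra.
  exists (Rmin d (eps/3)). split. apply Rmin_pos; lra.
  pose proof (Rmin_l d (eps/3)). pose proof (Rmin_r d (eps/3)).
  intros x y hx hy. unfold PBf.
  assert (X : 0 < Rpower (1 - x) a < eps * a / 3) by (split; [unfold Rpower; apply exp_pos| apply D; lra]).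
  assert (Y : 0 < Rpower (1 - y) a < eps * a / 3) by (split; [unfold Rpower; apply exp_pos| apply D; lra]).
  assert (X' : 0 < Rpower (1 - x) a / a < eps / 3).
  { split. apply Rdiv_lt_0_compat; lra. apply (Rmult_lt_reg_r a); auto. field_simplify; lra. }
  assert (Y' : 0 < Rpower (1 - y) a / a < eps / 3).
  { split. apply Rdiv_lt_0_compat; lra. apply (Rmult_lt_reg_r a); auto. field_simplify; lra. }
  apply abs_lt_intro. lra.
Qed.

Lemma phig_imp a (g : R -> R) : 0 < a -> (forall u, 0 <= u <= 1 -> continuity_pt g u) ->
  exists l, imp (fun u => phi a u * g u) l.
Proof.
  intros ha Hg.
  destruct (continuity_ab_maj (fun u => Rabs (g u)) 0 1 ltac:(lra)) as [Mx [HM _]].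
  { intros c hc. apply continuity_pt_comp with (f1 := g) (f2 := Rabs). apply Hg; auto. apply Rcontinuity_abs. }
  apply (dom_exists (Bf a) (PBf a)) with (M := Rabs (g Mx)).
  - intros u hu. apply Bf_cont. lra.
  - intros u hu. apply PBf_der; lra.
  - apply PB0; auto.
  - apply PB1; auto.
  - apply Rabs_pos.
  - intros u hu. apply (continuous_mult (K:=R_AbsRing) (phi a) g). apply phi_cont; lra.
    apply cp_c. apply Hg; lra.
  - intros u hu. rewrite Rabs_mult. rewrite (Rabs_right (phi a u)) by (left; apply phi_pos).
    pose proof (HM u ltac:(lra)). simpl in H. pose proof (phi_pos a u). pose proof (phi_le_B a u hu).
    pose proof (Rabs_pos (g u)). nra.
Qed.

Lemma phi_imp a : 0 < a -> exists K, imp (phi a) K.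
Proof.
  intros ha. destruct (phig_imp a (fun _ => 1) ha) as [K HK].
  intros; apply continuity_pt_const; intros ? ?; auto.
  exists K. eapply imp_ext; [|exact HK]. intros u _. simpl. ring.
Qed.

Lemma abs_betw x y d : Rmin x y <= d <= Rmax x y -> Rabs (d - x) <= Rabs (y - x).
Proof.
  intros H. unfold Rmin, Rmax in H. destruct (Rle_dec x y); apply abs_le_intro;
  unfold Rabs; destruct (Rcase_abs (y - x)); lra.
Qed.

Lemma imp_deriv a (g dg : R -> R -> R) s0 del :
 0 < a -> 0 < del ->
 (forall s, Rabs (s - s0) < del -> forall u, 0 <= u <= 1 -> continuity_pt (fun u => g u s) u) ->
 (forall u, 0 <= u <= 1 -> continuity_pt (fun u => dg u s0) u) ->
 (forall s, Rabs (s - s0) < del -> forall u, 0 <= u <= 1 -> is_derive (fun s => g u s) s (dg u s)) ->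
 (forall eps, 0 < eps -> exists eta, 0 < eta /\ forall s, Rabs (s - s0) < eta -> forall u, 0 <= u <= 1 -> Rabs (dg u s - dg u s0) <= eps) ->
 is_derive (fun s => ImpInt (fun u => phi a u * g u s) 0 1) s0 (ImpInt (fun u => phi a u * dg u s0) 0 1).
Proof.
  intros ha hdel Gc DGc Gd U. apply is_derive_Reals.
  destruct (phi_imp a ha) as [K HK].
  destruct (phig_imp a (fun u => dg u s0) ha DGc) as [ld Hld]. rewrite (ImpInt_eq _ _ Hld).
  intros eps he.
  set (e' := eps / (Rabs K + 1)).
  assert (hK : 0 < Rabs K + 1) by (pose proof (Rabs_pos K); lra).
  assert (he' : 0 < e') by (unfold e'; apply Rdiv_lt_0_compat; auto).
  destruct (U e' he') as [eta [heta Heta]].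
  assert (hd : 0 < Rmin del eta) by (apply Rmin_pos; auto).
  exists (mkposreal _ hd). intros h hh hlt. simpl in hlt.
  pose proof (Rmin_l del eta) as m1. pose proof (Rmin_r del eta) as m2.
  destruct (phig_imp a (fun u => g u (s0 + h)) ha) as [l1 H1].
  { apply Gc. replace (s0 + h - s0) with h by ring. lra. }
  destruct (phig_imp a (fun u => g u s0) ha) as [l0 H0].
  { apply Gc. rewrite Rminus_eq_0, Rabs_R0. lra. }
  rewrite (ImpInt_eq _ _ H1), (ImpInt_eq _ _ H0).
  pose proof (imp_lin _ _ _ _ (/h) (-/h) H1 H0) as H2.
  pose proof (imp_lin _ _ _ _ 1 (-1) H2 Hld) as H3.
  set (q := fun u => (g u (s0 + h) - g u s0) / h - dg u s0).
  assert (H4 : imp (fun u => phi a u * q u) (1 * (/ h * l1 + - / h * l0) + -1 * ld)).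
  { eapply imp_ext; [|exact H3]. intros u _. unfold q. field. auto. }
  assert (Bq : forall u, 0 < u < 1 -> Rabs (q u) <= e').
  { intros u hu. unfold q.
    destruct (MVT_gen (fun s => g u s) s0 (s0 + h) (dg u)) as [c [hc Ec]].
    - intros x hx. apply Gd. 2: lra. eapply Rle_lt_trans.
      apply abs_betw. split; apply Rlt_le; apply hx. replace (s0 + h - s0) with h by ring. lra.
    - intros x hx. apply c_cp. apply exd_cont. eexists. apply Gd. 2: lra.
      eapply Rle_lt_trans. apply abs_betw. exact hx. replace (s0 + h - s0) with h by ring. lra.
    - simpl in Ec. rewrite Ec. replace (dg u c * (s0 + h - s0) / h - dg u s0) with (dg u c - dg u s0) by (field; auto).
      apply Heta. 2: lra. eapply Rle_lt_trans. apply abs_betw. exact hc.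
      replace (s0 + h - s0) with h by ring. lra. }
  assert (Bq2 : forall u, 0 < u < 1 -> Rabs (phi a u * q u) <= e' * phi a u).
  { intros u hu. rewrite Rabs_mult. pose proof (phi_pos a u).
    rewrite (Rabs_right (phi a u)) by lra. specialize (Bq u hu). nra. }
  pose proof (imp_bound _ _ _ _ e' ltac:(lra) Bq2 H4 HK) as HB.
  replace ((/ h * l1 + - / h * l0)) with ((l1 - l0)/h) in HB by (field; auto).
  replace ((l1 - l0) / h - ld) with (1 * ((l1 - l0) / h) + -1 * ld) by ring.
  eapply Rle_lt_trans. exact HB.
  assert (e' * K <= e' * Rabs K) by (apply Rmult_le_compat_l; [lra| apply Rle_abs]).
  assert (E : e' * (Rabs K + 1) = eps) by (unfold e'; field; lra). nra.
Qed.

Definition C2 (k : R -> R -> R) := forall z s, continuity_2d_pt k z s.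

Definition Hc (k : R -> R -> R) (c x t : R) := RInt (fun s => k (x + c * (t - s)) s) 0 t.

Lemma isd_comp (h g : R -> R) x dh dg : is_derive h (g x) dh -> is_derive g x dg -> is_derive (fun x => h (g x)) x (dg * dh).
Proof. intros. apply (is_derive_comp (K:=R_AbsRing) (V:=R_NormedModule) h g x dh dg); auto. Qed.

Lemma c2_comp k g1 g2 x y : C2 k -> continuity_2d_pt g1 x y -> continuity_2d_pt g2 x y ->
  continuity_2d_pt (fun x y => k (g1 x y) (g2 x y)) x y.
Proof.
  intros Hk H1 H2 eps. destruct (Hk (g1 x y) (g2 x y) eps) as [d1 D1].
  destruct (H1 d1) as [da Da]. destruct (H2 d1) as [db Db].
  assert (hd : 0 < Rmin da db) by (apply Rmin_pos; apply cond_pos).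
  exists (mkposreal _ hd). simpl. intros u v hu hv.
  pose proof (Rmin_l da db). pose proof (Rmin_r da db).
  apply D1. apply Da; lra. apply Db; lra.
Qed.

Lemma c2_t f x y : continuity_2d_pt f x y -> continuity_pt (fun t => f x t) y.
Proof.
  intros H. apply continuity_pt_filterlim. intros P [e HP].
  destruct (H e) as [d D]. exists d. intros v hv. apply HP. apply D.
  rewrite Rminus_eq_0, Rabs_R0. apply cond_pos. exact hv.
Qed.

Lemma c2_x f x y : continuity_2d_pt f x y -> continuity_pt (fun z => f z y) x.
Proof.
  intros H. apply continuity_pt_filterlim. intros P [e HP].
  destruct (H e) as [d D]. exists d. intros v hv. apply HP. apply D. exact hv.
  rewrite Rminus_eq_0, Rabs_R0. apply cond_pos.
Qed.

Lemma c2_aff k c x t s0 : C2 k -> continuity_pt (fun s => k (x + c * (t - s)) s) s0.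
Proof.
  intros Hk. apply (c2_t (fun (_ : R) s => k (x + c * (t - s)) s) 0 s0).
  apply (c2_comp k (fun _ s => x + c * (t - s)) (fun _ s => s)); auto.
  - apply continuity_2d_pt_plus. apply continuity_2d_pt_const. apply continuity_2d_pt_mult.
    apply continuity_2d_pt_const. apply continuity_2d_pt_minus. apply continuity_2d_pt_const. apply continuity_2d_pt_id2.
  - apply continuity_2d_pt_id2.
Qed.

Lemma ex_aff k c x t a b : C2 k -> ex_RInt (fun s => k (x + c * (t - s)) s) a b.
Proof.
  intros Hk. apply (ex_RInt_continuous (V:=R_CompleteNormedModule)). intros z _.
  apply cp_c. apply c2_aff; auto.
Qed.

Lemma isR_abs_const (f : R -> R) a b l M : (forall x, Rmin a b <= x <= Rmax a b -> Rabs (f x) <= M) ->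
  is_RInt f a b l -> Rabs l <= Rabs (b - a) * M.
Proof. intros. apply (norm_RInt_le_const_abs (V:=R_NormedModule) f a b l M); auto. Qed.

Lemma Rabs_sub_le x y : Rabs x - Rabs y <= Rabs (x - y).
Proof. pose proof (Rabs_triang_inv x y). auto. Qed.

Lemma abs_within y x Z : Rabs (y - x) <= Z -> x - Z <= y <= x + Z.
Proof. intros H. apply abs_le_elim in H. lra. Qed.

Lemma H1 k c : C2 k -> C2 (Hc k c).
Proof.
  intros Hk x t eps.
  set (T := Rabs t + 1). set (Z := 1 + Rabs c * (2 * T)).
  assert (hT : 1 <= T) by (unfold T; pose proof (Rabs_pos t); lra).
  assert (hZ : 1 <= Z) by (unfold Z; pose proof (Rabs_pos c); nra).
  set (e1 := eps / (2 * T)).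
  assert (he1 : 0 < e1) by (unfold e1; apply Rdiv_lt_0_compat; [apply cond_pos| lra]).
  destruct (uniform_continuity_2d k (x - Z) (x + Z) (-T) T ltac:(intros; apply Hk) (mkposreal _ he1)) as [du Du].
  destruct (Hk x t (mkposreal 1 Rlt_0_1)) as [dp Dp]. simpl in Du, Dp.
  set (kc := Rabs (k x t) + 1). assert (hkc : 1 <= kc) by (unfold kc; pose proof (Rabs_pos (k x t)); lra).
  set (C := 1 + Rabs c). assert (hC : 1 <= C) by (unfold C; pose proof (Rabs_pos c); lra).
  assert (hdu := cond_pos du). assert (hdp := cond_pos dp). assert (heps := cond_pos eps).
  set (d := Rmin (Rmin 1 (du / (2 * C))) (Rmin (dp / (2 * C)) (eps / (2 * kc)))).
  assert (hd : 0 < d).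
  { unfold d. repeat apply Rmin_pos; try lra; apply Rdiv_lt_0_compat; lra. }
  assert (d1 : d <= 1) by (unfold d; pose proof (Rmin_l (Rmin 1 (du / (2 * C))) (Rmin (dp / (2 * C)) (eps / (2 * kc)))); pose proof (Rmin_l 1 (du / (2 * C))); lra).
  assert (d2 : d <= du / (2 * C)) by (unfold d; pose proof (Rmin_l (Rmin 1 (du / (2 * C))) (Rmin (dp / (2 * C)) (eps / (2 * kc)))); pose proof (Rmin_r 1 (du / (2 * C))); lra).
  assert (d3 : d <= dp / (2 * C)) by (unfold d; pose proof (Rmin_r (Rmin 1 (du / (2 * C))) (Rmin (dp / (2 * C)) (eps / (2 * kc)))); pose proof (Rmin_l (dp / (2 * C)) (eps / (2 * kc))); lra).
  assert (d4 : d <= eps / (2 * kc)) by (unfold d; pose proof (Rmin_r (Rmin 1 (du / (2 * C))) (Rmin (dp / (2 * C)) (eps / (2 * kc)))); pose proof (Rmin_r (dp / (2 * C)) (eps / (2 * kc))); lra).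
  assert (dC : d * C <= du / 2) by (apply (Rmult_le_compat_r C) in d2; [|lra]; replace (du / (2 * C) * C) with (du / 2) in d2 by (field; lra); lra).
  assert (dC' : d * C <= dp / 2) by (apply (Rmult_le_compat_r C) in d3; [|lra]; replace (dp / (2 * C) * C) with (dp / 2) in d3 by (field; lra); lra).
  assert (dk : d * kc <= eps / 2) by (apply (Rmult_le_compat_r kc) in d4; [|lra]; replace (eps / (2 * kc) * kc) with (eps / 2) in d4 by (field; lra); lra).
  exists (mkposreal d hd). simpl. intros x' t' hx ht. unfold Hc.
  pose proof (iru _ _ _ _ (isR_lin (fun s => k (x' + c * (t' - s)) s) (fun s => k (x + c * (t - s)) s) 0 t _ _ 1 (-1) (rc _ _ _ (ex_aff k c x' t' 0 t Hk)) (rc _ _ _ (ex_aff k c x t 0 t Hk)))) as E1.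
  pose proof (iru _ _ _ _ (isR_chasles (fun s => k (x' + c * (t' - s)) s) 0 t t' _ _ (rc _ _ _ (ex_aff k c x' t' 0 t Hk)) (rc _ _ _ (ex_aff k c x' t' t t' Hk)))) as E2.
  set (f' := fun s => k (x' + c * (t' - s)) s) in *. set (f := fun s => k (x + c * (t - s)) s) in *.
  assert (E : RInt f' 0 t' - RInt f 0 t = RInt (fun s => 1 * f' s + (-1) * f s) 0 t + RInt f' t t').
  { rewrite E1, E2. ring. }
  rewrite E.
  assert (ct : Rabs c * Rabs (t' - t) <= Rabs c * d) by (apply Rmult_le_compat_l; [apply Rabs_pos|lra]).
  assert (A1 : Rabs (RInt (fun s => 1 * f' s + (-1) * f s) 0 t) <= Rabs (t - 0) * e1).
  { apply (isR_abs_const (fun s => 1 * f' s + (-1) * f s) 0 t).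
    2: { apply rc. eexists. apply isR_lin; apply rc; apply ex_aff; auto. }
    intros s hs. unfold f', f.
    assert (hs' : Rabs s <= Rabs t) by (unfold Rmin, Rmax in hs; destruct (Rle_dec 0 t); unfold Rabs; destruct (Rcase_abs s), (Rcase_abs t); lra).
    assert (Rabs (t - s) <= 2 * T) by (unfold T; eapply Rle_trans; [apply Rabs_triang| rewrite Rabs_Ropp; lra]).
    assert (Rabs (t' - s) <= 2 * T).
    { unfold T. eapply Rle_trans. apply Rabs_triang. rewrite Rabs_Ropp. 
      pose proof (Rabs_triang_inv t' t). assert (Rabs t' <= Rabs t + 1) by lra. lra. }
    assert (Rabs c * Rabs (t - s) <= Rabs c * (2*T)) by (apply Rmult_le_compat_l; [apply Rabs_pos|lra]).
    assert (Rabs c * Rabs (t' - s) <= Rabs c * (2*T)) by (apply Rmult_le_compat_l; [apply Rabs_pos|lra]).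
    replace (1 * k (x' + c * (t' - s)) s + -1 * k (x + c * (t - s)) s) with (k (x' + c * (t' - s)) s - k (x + c * (t - s)) s) by ring.
    apply Rlt_le. apply Du.
    - apply abs_within.
      replace (x + c * (t - s) - x) with (c * (t - s)) by ring. rewrite Rabs_mult. unfold Z. lra.
    - apply abs_le_elim. unfold T. lra.
    - apply abs_within. replace (x' + c * (t' - s) - x) with ((x' - x) + c * (t' - s)) by ring.
      eapply Rle_trans. apply Rabs_triang. rewrite Rabs_mult. unfold Z. lra.
    - apply abs_le_elim. unfold T. lra.
    - replace (x' + c * (t' - s) - (x + c * (t - s))) with ((x' - x) + c * (t' - t)) by ring.
      eapply Rle_lt_trans. apply Rabs_triang. rewrite Rabs_mult. unfold C in dC. lra.
    - rewrite Rminus_eq_0, Rabs_R0. auto. }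
  assert (A2 : Rabs (RInt f' t t') <= Rabs (t' - t) * kc).
  { apply (isR_abs_const f' t t'). 2: apply rc; apply ex_aff; auto.
    intros s hs. unfold f'.
    assert (hs' : Rabs (s - t) <= Rabs (t' - t)) by (exact (abs_betw t t' s hs)).
    assert (hs'' : Rabs (s - t') <= Rabs (t - t')) by (apply (abs_betw t' t s); rewrite Rmin_comm, Rmax_comm; exact hs).
    rewrite Rabs_minus_sym in hs''. rewrite (Rabs_minus_sym t t') in hs''.
    assert (Rabs c * Rabs (t' - s) <= Rabs c * d) by (apply Rmult_le_compat_l; [apply Rabs_pos|lra]).
    assert (X : Rabs (k (x' + c * (t' - s)) s - k x t) < 1).
    { apply Dp.
      - replace (x' + c * (t' - s) - x) with ((x' - x) + c * (t' - s)) by ring.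
        eapply Rle_lt_trans. apply Rabs_triang. rewrite Rabs_mult. unfold C in dC'. lra.
      - unfold C in dC'. pose proof (Rabs_pos c). nra. }
    pose proof (Rabs_triang_inv (k (x' + c * (t' - s)) s) (k x t)). unfold kc. lra. }
  eapply Rle_lt_trans. apply Rabs_triang.
  assert (Rabs (t - 0) * e1 <= eps / 2).
  { rewrite Rminus_0_r. unfold e1. apply (Rmult_le_reg_r (2 * T)). lra.
    replace (Rabs t * (eps / (2 * T)) * (2 * T)) with (Rabs t * eps) by (field; lra).
    replace (eps / 2 * (2 * T)) with (eps * T) by field. unfold T. nra. }
  assert (Rabs (t' - t) * kc < d * kc) by (apply Rmult_lt_compat_r; lra).
  lra.
Qed.

Definition DX (k k1 : R -> R -> R) := forall z s, is_derive (fun z => k z s) z (k1 z s).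

Lemma isd_ext (f g : R -> R) (x l l' : R) : (forall t, f t = g t) -> l = l' -> is_derive f x l -> is_derive g x l'.
Proof. intros E El H. subst. eapply is_derive_ext; eauto. Qed.

Lemma der_lin k k1 m b v u : DX k k1 -> is_derive (fun z => k (b + m * z) v) u (m * k1 (b + m * u) v).
Proof.
  intros D. apply (isd_comp (fun z => k z v) (fun z => b + m * z) u). apply D.
  auto_derive; auto. ring.
Qed.

Lemma c2_lin k x y (m1 m2 b : R) : C2 k -> continuity_2d_pt (fun u v => k (b + m1 * u + m2 * v) v) x y.
Proof.
  intros Hk. apply (c2_comp k (fun u v => b + m1 * u + m2 * v) (fun _ v => v)); auto.
  - repeat first [apply continuity_2d_pt_plus | apply continuity_2d_pt_mult | apply continuity_2d_pt_const | apply continuity_2d_pt_id1 | apply continuity_2d_pt_id2].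
  - apply continuity_2d_pt_id2.
Qed.

Lemma H3 k k1 c x t : C2 k -> C2 k1 -> DX k k1 -> is_derive (fun x => Hc k c x t) x (Hc k1 c x t).
Proof.
  intros Hk Hk1 D.
  assert (DE : forall u v, Derive (fun z => k (z + c * (t - v)) v) u = k1 (u + c * (t - v)) v).
  { intros u v. apply is_derive_unique.
    eapply isd_ext. 3: apply (der_lin k k1 1 (c * (t - v)) v u D).
    intros z; simpl; f_equal; ring. rewrite Rmult_1_l. f_equal; ring. }
  pose proof (is_derive_RInt_param (fun x s => k (x + c * (t - s)) s) 0 t x) as P.
  replace (Hc k1 c x t) with (RInt (fun s => Derive (fun u => k (u + c * (t - s)) s) x) 0 t).
  apply P.
  - apply filter_forall. intros x0 s _. eexists. 
    eapply isd_ext. 3: apply (der_lin k k1 1 (c * (t - s)) s x0 D). intros z; simpl; f_equal; ring. reflexivity.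
  - intros s _. apply continuity_2d_pt_ext with (fun u v => k1 (c * t + 1 * u + (- c) * v) v).
    intros u v. rewrite DE. f_equal. ring. apply c2_lin; auto.
  - apply filter_forall. intros y. apply ex_RInt_ext with (fun s => k (y + c * (t - s)) s).
    intros; reflexivity. apply ex_aff; auto.
  - unfold Hc. apply RInt_ext. intros s _. apply DE.
Qed.

Lemma H2 k k1 c x t : C2 k -> C2 k1 -> DX k k1 -> is_derive (fun t => Hc k c x t) t (k x t + c * Hc k1 c x t).
Proof.
  intros Hk Hk1 D. unfold Hc.
  assert (DE : forall u v, Derive (fun z => k (x + c * (z - v)) v) u = c * k1 (x + c * (u - v)) v).
  { intros u v. apply is_derive_unique.
    eapply isd_ext. 3: apply (der_lin k k1 c (x - c * v) v u D).
    intros z; simpl; f_equal; ring. f_equal; f_equal; ring. }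
  assert (CD : forall u v, continuity_2d_pt (fun u v => Derive (fun z => k (x + c * (z - v)) v) u) u v).
  { intros u v. apply continuity_2d_pt_ext with (fun u v => c * k1 (x + c * u + (- c) * v) v).
    intros u' v'. rewrite DE. f_equal. f_equal. ring. apply continuity_2d_pt_mult. apply continuity_2d_pt_const.
    apply c2_lin; auto. }
  pose proof (is_derive_RInt_param_bound_comp (fun t s => k (x + c * (t - s)) s) (fun _ => 0) (fun t => t) t 0 1) as P.
  simpl in P.
  replace (k x t + c * RInt (fun s => k1 (x + c * (t - s)) s) 0 t) with
    (RInt (fun s => Derive (fun u => k (x + c * (u - s)) s) t) 0 t + - k (x + c * (t - 0)) 0 * 0 + k (x + c * (t - t)) t * 1).
  apply P.
  - apply filter_forall. intros y. apply ex_aff; auto.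
  - exists (mkposreal 1 Rlt_0_1). apply filter_forall. intros y. apply ex_aff; auto.
  - exists (mkposreal 1 Rlt_0_1). apply filter_forall. intros y. apply ex_aff; auto.
  - apply (is_derive_const (K:=R_AbsRing) (V:=R_NormedModule)).
  - apply (is_derive_id (K:=R_AbsRing)).
  - exists (mkposreal 1 Rlt_0_1). apply filter_forall. intros y s _. eexists.
    eapply isd_ext. 3: apply (der_lin k k1 c (x - c * s) s y D). intros z; simpl; f_equal; ring. reflexivity.
  - intros s _. apply CD.
  - exists (mkposreal 1 Rlt_0_1). intros; apply CD.
  - exists (mkposreal 1 Rlt_0_1). intros; apply CD.
  - apply c2_aff; auto.
  - apply c2_aff; auto.
  - rewrite (RInt_ext _ (fun s => c * k1 (x + c * (t - s)) s)).
    rewrite (iru _ _ _ _ (isR_scal (fun s => k1 (x + c * (t - s)) s) 0 t _ c (rc _ _ _ (ex_aff k1 c x t 0 t Hk1)))).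
    replace (x + c * (t - t)) with x by ring. ring.
    intros s _. apply DE.
Qed.

Lemma isd_lin2 (f g : R -> R) (x a b k1 k2 : R) : is_derive f x a -> is_derive g x b ->
  is_derive (fun y => k1 * f y + k2 * g y) x (k1 * a + k2 * b).
Proof.
  intros Ha Hb. apply (is_derive_plus (K:=R_AbsRing) (V:=R_NormedModule) (fun y => k1 * f y) (fun y => k2 * g y));
  apply is_derive_scal; auto.
Qed.

Lemma c2_swap f x y : continuity_2d_pt f x y -> continuity_2d_pt (fun a b => f b a) y x.
Proof. intros H eps. destruct (H eps) as [d D]. exists d. intros u v hu hv. apply D; auto. Qed.

Lemma c2_lin2 f g k1 k2 x y : continuity_2d_pt f x y -> continuity_2d_pt g x y ->
  continuity_2d_pt (fun a b => k1 * f a b + k2 * g a b) x y.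
Proof.
  intros. apply continuity_2d_pt_plus; apply continuity_2d_pt_mult; auto; apply continuity_2d_pt_const.
Qed.

Section Wave.
Variables (c : R) (Fe F1e : R -> R -> R).
Hypothesis hc : 0 < c.
Hypothesis CF : C2 Fe.
Hypothesis CF1 : C2 F1e.
Hypothesis DF : DX Fe F1e.

Definition P z s := RInt (fun y => Fe y s) 0 z.

Lemma CP : C2 P.
Proof.
  intros z s. apply continuity_2d_pt_ext with (fun a b => Hc (fun p y => Fe y p) 0 b a).
  - intros a b. unfold Hc, P. apply RInt_ext. intros y _. f_equal. ring.
  - apply c2_swap. apply H1. intros a b. apply c2_swap. apply CF.
Qed.

Lemma DP : DX P Fe.
Proof.
  intros z s. unfold P. apply (is_derive_RInt (V:=R_NormedModule) (fun y => Fe y s) (fun b => RInt (fun y => Fe y s) 0 b) 0 z).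
  - apply filter_forall. intros b. apply rc. apply (ex_RInt_continuous (V:=R_CompleteNormedModule)).
    intros y _. apply cp_c. apply (c2_x Fe y s). apply CF.
  - apply cp_c. apply (c2_x Fe z s). apply CF.
Qed.

Definition W x t := /(2*c) * (Hc P c x t - Hc P (-c) x t).
Definition Wt x t := /2 * (Hc Fe c x t + Hc Fe (-c) x t).
Definition Wtt x t := Fe x t + c/2 * (Hc F1e c x t - Hc F1e (-c) x t).
Definition Wx x t := /(2*c) * (Hc Fe c x t - Hc Fe (-c) x t).
Definition Wxx x t := /(2*c) * (Hc F1e c x t - Hc F1e (-c) x t).

Lemma W_t x t : is_derive (fun t => W x t) t (Wt x t).
Proof.
  pose proof (isd_lin2 _ _ t _ _ (/(2*c)) (-/(2*c)) (H2 P Fe c x t CP CF DP) (H2 P Fe (-c) x t CP CF DP)) as D.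
  eapply isd_ext. 3: exact D. intro t0; cbv beta; unfold W; ring. unfold Wt. field. lra.
Qed.

Lemma Wt_t x t : is_derive (fun t => Wt x t) t (Wtt x t).
Proof.
  pose proof (isd_lin2 _ _ t _ _ (/2) (/2) (H2 Fe F1e c x t CF CF1 DF) (H2 Fe F1e (-c) x t CF CF1 DF)) as D.
  eapply isd_ext. 3: exact D. intro t0; cbv beta; unfold Wt; ring. unfold Wtt. field.
Qed.

Lemma W_x x t : is_derive (fun x => W x t) x (Wx x t).
Proof.
  pose proof (isd_lin2 _ _ x _ _ (/(2*c)) (-/(2*c)) (H3 P Fe c x t CP CF DP) (H3 P Fe (-c) x t CP CF DP)) as D.
  eapply isd_ext. 3: exact D. intro t0; cbv beta; unfold W; ring. unfold Wx. ring.
Qed.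

Lemma Wx_x x t : is_derive (fun x => Wx x t) x (Wxx x t).
Proof.
  pose proof (isd_lin2 _ _ x _ _ (/(2*c)) (-/(2*c)) (H3 Fe F1e c x t CF CF1 DF) (H3 Fe F1e (-c) x t CF CF1 DF)) as D.
  eapply isd_ext. 3: exact D. intro t0; cbv beta; unfold Wx; ring. unfold Wxx. ring.
Qed.

Lemma W_eq x t : Wtt x t = c^2 * Wxx x t + Fe x t.
Proof. unfold Wtt, Wxx. field. lra. Qed.

Lemma Hc0 k a x : Hc k a x 0 = 0.
Proof. unfold Hc. apply (RInt_point (V:=R_CompleteNormedModule)). Qed.

Lemma Wt0 x : Wt x 0 = 0.
Proof. unfold Wt. rewrite !Hc0. ring. Qed.
Lemma W0 x : W x 0 = 0.
Proof. unfold W. rewrite !Hc0. ring. Qed.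

Lemma CW : C2 W.
Proof. intros x t. unfold W. apply continuity_2d_pt_ext with (fun a b => /(2*c) * Hc P c a b + (-/(2*c)) * Hc P (-c) a b).
  intros; ring. apply c2_lin2; apply H1; apply CP. Qed.
Lemma CWt : C2 Wt.
Proof. intros x t. unfold Wt. apply continuity_2d_pt_ext with (fun a b => /2 * Hc Fe c a b + /2 * Hc Fe (-c) a b).
  intros; ring. apply c2_lin2; apply H1; apply CF. Qed.
Lemma CWx : C2 Wx.
Proof. intros x t. unfold Wx. apply continuity_2d_pt_ext with (fun a b => /(2*c) * Hc Fe c a b + (-/(2*c)) * Hc Fe (-c) a b).
  intros; ring. apply c2_lin2; apply H1; apply CF. Qed.
Lemma CWxx : C2 Wxx.
Proof. intros x t. unfold Wxx. apply continuity_2d_pt_ext with (fun a b => /(2*c) * Hc F1e c a b + (-/(2*c)) * Hc F1e (-c) a b).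
  intros; ring. apply c2_lin2; apply H1; apply CF1. Qed.
Lemma CWtt : C2 Wtt.
Proof. intros x t. unfold Wtt. apply continuity_2d_pt_ext with (fun a b => 1 * Fe a b + 1 * (c/2 * Hc F1e c a b + (-(c/2)) * Hc F1e (-c) a b)).
  intros; ring. apply c2_lin2. apply CF. apply c2_lin2; apply H1; apply CF1. Qed.

End Wave.

Lemma cp_mul (f g : R -> R) u : continuity_pt f u -> continuity_pt g u -> continuity_pt (fun u => f u * g u) u.
Proof. intros. exact (continuity_pt_mult f g u H H0). Qed.

Lemma cp_ut G x t u : C2 G -> continuity_pt (fun u => G x (u * t)) u.
Proof.
  intros CG. apply (continuity_pt_comp (fun u => u * t) (G x) u).
  apply cp_mul. apply continuity_pt_id. apply continuity_pt_const. intros ? ?; auto.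
  apply (c2_t G x (u * t)). apply CG.
Qed.

Lemma imp_G a G x t (m : R -> R) : 0 < a -> C2 G -> (forall u, 0 <= u <= 1 -> continuity_pt m u) ->
  exists l, imp (fun u => phi a u * (m u * G x (u * t))) l.
Proof.
  intros ha CG Cm. apply (phig_imp a (fun u => m u * G x (u * t)) ha).
  intros u hu. apply cp_mul. auto. apply cp_ut; auto.
Qed.

Lemma unif_t G x t : C2 G -> forall eps, 0 < eps -> exists eta, 0 < eta /\ forall s, Rabs (s - t) < eta ->
  forall u, 0 <= u <= 1 -> Rabs (G x (u * s) - G x (u * t)) <= eps.
Proof.
  intros CG eps he. set (T := Rabs t + 1).
  destruct (uniform_continuity_2d G x x (-T) T ltac:(intros; apply CG) (mkposreal _ he)) as [d D]. simpl in D.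
  assert (hd := cond_pos d).
  exists (Rmin d 1). split. apply Rmin_pos; lra. intros s hs u hu.
  pose proof (Rmin_l d 1). pose proof (Rmin_r d 1).
  assert (Rabs s <= T) by (unfold T; pose proof (Rabs_triang_inv s t); lra).
  assert (Rabs (u * s) <= T) by (rewrite Rabs_mult, (Rabs_right u) by lra; pose proof (Rabs_pos s); nra).
  assert (Rabs (u * t) <= T) by (rewrite Rabs_mult, (Rabs_right u) by lra; pose proof (Rabs_pos t); unfold T; nra).
  apply Rlt_le. apply D; try lra; try (apply abs_le_elim; auto).
  rewrite Rminus_eq_0, Rabs_R0; auto.
  replace (u * s - u * t) with (u * (s - t)) by ring. rewrite Rabs_mult, (Rabs_right u) by lra.
  pose proof (Rabs_pos (s - t)). nra.
Qed.

Lemma unif_x G x t : C2 G -> forall eps, 0 < eps -> exists eta, 0 < eta /\ forall y, Rabs (y - x) < eta ->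
  forall u, 0 <= u <= 1 -> Rabs (G y (u * t) - G x (u * t)) <= eps.
Proof.
  intros CG eps he. set (T := Rabs t + 1).
  destruct (uniform_continuity_2d G (x - 1) (x + 1) (-T) T ltac:(intros; apply CG) (mkposreal _ he)) as [d D]. simpl in D.
  assert (hd := cond_pos d).
  exists (Rmin d 1). split. apply Rmin_pos; lra. intros y hy u hu.
  pose proof (Rmin_l d 1). pose proof (Rmin_r d 1).
  assert (Rabs (u * t) <= T) by (rewrite Rabs_mult, (Rabs_right u) by lra; pose proof (Rabs_pos t); unfold T; nra).
  apply Rlt_le. apply D; try lra; try (apply abs_le_elim; auto).
  apply abs_within. lra.
  rewrite Rminus_eq_0, Rabs_R0; auto.
Qed.

Lemma E2 a G G' x t (m : R -> R) : 0 < a -> C2 G -> C2 G' -> (forall x s, is_derive (fun s => G x s) s (G' x s)) ->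
  (forall u, 0 <= u <= 1 -> continuity_pt m u) -> (forall u, 0 <= u <= 1 -> Rabs (m u) <= 1) ->
  is_derive (fun s => ImpInt (fun u => phi a u * (m u * G x (u * s))) 0 1) t
            (ImpInt (fun u => phi a u * (m u * (u * G' x (u * t)))) 0 1).
Proof.
  intros ha CG CG' DG Cm Bm.
  apply (imp_deriv a (fun u s => m u * G x (u * s)) (fun u s => m u * (u * G' x (u * s))) t 1 ha Rlt_0_1).
  - intros s _ u hu. apply cp_mul. auto. apply cp_ut; auto.
  - intros u hu. apply cp_mul. auto. apply cp_mul. apply continuity_pt_id. apply cp_ut; auto.
  - intros s _ u hu. apply is_derive_scal.
    apply (isd_comp (G x) (fun s => u * s) s). apply DG. auto_derive; auto. ring.
  - intros eps he. destruct (unif_t G' x t CG' eps he) as [eta [heta D]]. exists eta. split; auto.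
    intros s hs u hu. replace (m u * (u * G' x (u * s)) - m u * (u * G' x (u * t))) with
      ((m u * u) * (G' x (u * s) - G' x (u * t))) by ring.
    rewrite Rabs_mult, Rabs_mult, (Rabs_right u) by lra. specialize (D s hs u hu). specialize (Bm u hu).
    pose proof (Rabs_pos (m u)). pose proof (Rabs_pos (G' x (u * s) - G' x (u * t))).
    assert (Rabs (m u) * u <= 1) by nra. nra.
Qed.

Lemma E3 a G G' x t : 0 < a -> C2 G -> C2 G' -> (forall x s, is_derive (fun x => G x s) x (G' x s)) ->
  is_derive (fun y => ImpInt (fun u => phi a u * G y (u * t)) 0 1) x
            (ImpInt (fun u => phi a u * G' x (u * t)) 0 1).
Proof.
  intros ha CG CG' DG.
  apply (imp_deriv a (fun u y => G y (u * t)) (fun u y => G' y (u * t)) x 1 ha Rlt_0_1).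
  - intros s _ u hu. apply cp_ut; auto.
  - intros u hu. apply cp_ut; auto.
  - intros s _ u hu. apply DG.
  - intros eps he. destruct (unif_x G' x t CG' eps he) as [eta [heta D]]. exists eta. split; auto.
Qed.

Lemma loc_pos t : 0 < t -> locally t (fun s => 0 < s).
Proof.
  intros ht. exists (mkposreal t ht). intros y Hy. change (Rabs (y - t) < t) in Hy.
  apply Rabs_def2 in Hy. lra.
Qed.

Lemma Rmax_lip v t : Rabs (Rmax v 0 - Rmax t 0) <= Rabs (v - t).
Proof. unfold Rmax. destruct (Rle_dec v 0), (Rle_dec t 0); unfold Rabs; destruct (Rcase_abs (v - t)); try destruct (Rcase_abs _); lra. Qed.

Lemma C2_ext G : cont_half G -> C2 (fun x t => G x (Rmax t 0)).
Proof.
  intros HG x t eps. destruct (HG x (Rmax t 0) (Rmax_r t 0) eps (cond_pos eps)) as [d [hd D]].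
  exists (mkposreal d hd). simpl. intros u v hu hv. apply D. apply Rmax_r. auto.
  eapply Rle_lt_trans. apply Rmax_lip. auto.
Qed.

Lemma imp_0 : imp (fun _ => 0) 0.
Proof.
  assert (H : forall p q, is_RInt (fun _ : R => 0) p q 0).
  { intros p q. pose proof (is_RInt_const (V:=R_NormedModule) p q 0) as H.
    change (scal (q - p) 0) with ((q - p) * 0) in H. rewrite Rmult_0_r in H. exact H. }
  split. intros p q _ _ _. exists 0. apply H.
  intros eps he. exists 1. split. lra. intros p q _ _ _ _ _. rewrite (iru _ _ _ _ (H p q)).
  rewrite Rminus_eq_0, Rabs_R0. auto.
Qed.

Lemma imp_zero_fun f : (forall u, 0 < u < 1 -> f u = 0) -> imp f 0.
Proof. intros E. apply (imp_ext (fun _ => 0)). intros u hu. rewrite E; auto. apply imp_0. Qed.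

Lemma ImpInt_ext f g : (exists l, imp f l) -> (forall u, 0 < u < 1 -> f u = g u) -> ImpInt g 0 1 = ImpInt f 0 1.
Proof.
  intros [l H] E. rewrite (ImpInt_eq f l H). apply ImpInt_eq. eapply imp_ext; eauto.
Qed.

Lemma imp_zero (f G : R -> R) : (forall u, 0 < u < 1 -> is_derive G u (f u)) -> (forall u, 0 < u < 1 -> continuous f u) ->
  (forall eps, 0 < eps -> exists d, 0 < d /\ forall q, 1 - d < q < 1 -> Rabs (G q) < eps) ->
  (forall eps, 0 < eps -> exists d, 0 < d /\ forall p, 0 < p < d -> Rabs (G p) < eps) -> imp f 0.
Proof.
  intros D C L1 L0.
  assert (I : forall p q, 0 < p -> p <= q -> q < 1 -> is_RInt f p q (G q - G p)).
  { intros p q hp hpq hq. apply isR_derive; intros z hz; rewrite Rmin_left in hz by lra; rewrite Rmax_right in hz by lra.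
    apply D; lra. apply C; lra. }
  split. intros p q hp hpq hq. eexists. apply I; auto.
  intros eps he. destruct (L1 (eps/2) ltac:(lra)) as [d1 [hd1 D1]]. destruct (L0 (eps/2) ltac:(lra)) as [d0 [hd0 D0]].
  exists (Rmin d0 d1). split. apply Rmin_pos; auto. intros p q hp hp2 hq hq2 hpq.
  pose proof (Rmin_l d0 d1). pose proof (Rmin_r d0 d1).
  rewrite (iru _ _ _ _ (I p q hp hpq hq2)). rewrite Rminus_0_r.
  eapply Rle_lt_trans. apply Rabs_triang. rewrite Rabs_Ropp.
  assert (Rabs (G q) < eps/2) by (apply D1; lra). assert (Rabs (G p) < eps/2) by (apply D0; lra). lra.
Qed.

Lemma wave_eq c F Fe x tau : 0 < c -> C2 Fe -> (forall y s, 0 <= s -> Fe y s = F y s) -> 0 <= tau ->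
  wave_sol c F x tau = W c Fe x tau.
Proof.
  intros hc CF EF ht. unfold wave_sol, W.
  assert (CP' := CP Fe CF).
  assert (Inner : forall s, 0 < s -> Defs.RInt (fun y => F y s) (x - c * (tau - s)) (x + c * (tau - s))
                    = P Fe (x + c * (tau - s)) s - P Fe (x + - c * (tau - s)) s).
  { intros s hs. replace (fun y => F y s) with (fun y => Fe y s).
    2: { apply functional_extensionality. intros y. apply EF. lra. }
    assert (ex : forall a b, ex_RInt (fun y => Fe y s) a b).
    { intros a b. apply (ex_RInt_continuous (V:=R_CompleteNormedModule)). intros y _. apply cp_c. apply (c2_x Fe y s). apply CF. }
    rewrite DRInt_eq by apply ex. unfold P. apply iru.
    replace (RInt (fun y => Fe y s) 0 (x + c * (tau - s)) - RInt (fun y => Fe y s) 0 (x + - c * (tau - s)))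
      with (- RInt (fun y => Fe y s) 0 (x + - c * (tau - s)) + RInt (fun y => Fe y s) 0 (x + c * (tau - s))) by ring.
    replace (x - c * (tau - s)) with (x + - c * (tau - s)) by ring.
    apply isR_chasles with 0. apply isR_swap. apply rc. apply ex. apply rc. apply ex. }
  assert (exP : ex_RInt (fun s => 1 * P Fe (x + c * (tau - s)) s + (-1) * P Fe (x + - c * (tau - s)) s) 0 tau).
  { eexists. apply isR_lin; apply rc; apply ex_aff; auto. }
  assert (ExtE : forall s, Rmin 0 tau < s < Rmax 0 tau ->
     1 * P Fe (x + c * (tau - s)) s + (-1) * P Fe (x + - c * (tau - s)) s =
     Defs.RInt (fun y => F y s) (x - c * (tau - s)) (x + c * (tau - s))).
  { intros s hs. rewrite Rmin_left in hs by lra. rewrite Rmax_right in hs by lra. rewrite Inner by lra. ring. }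
  rewrite DRInt_eq. 2: { eapply ex_RInt_ext. exact ExtE. exact exP. }
  rewrite <- (RInt_ext _ _ 0 tau ExtE).
  rewrite (iru _ _ _ _ (isR_lin _ _ 0 tau _ _ 1 (-1) (rc _ _ _ (ex_aff (P Fe) c x tau 0 tau CP')) (rc _ _ _ (ex_aff (P Fe) (-c) x tau 0 tau CP')))).
  unfold Hc. ring.
Qed.

Lemma cp_lin k1 k2 (f g : R -> R) u : continuity_pt f u -> continuity_pt g u -> continuity_pt (fun u => k1 * f u + k2 * g u) u.
Proof.
  intros. apply (continuity_pt_plus (fun u => k1 * f u) (fun u => k2 * g u)); apply cp_mul; auto;
  apply continuity_pt_const; intros ? ?; auto.
Qed.

Lemma psi_eq a z : 0 < z -> Rpower z a = z * Rpower z (a - 1).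
Proof. intros hz. unfold Rpower. rewrite exp_shift by auto. field. lra. Qed.

Lemma psi_der a u : -1 < u < 1 -> is_derive (fun u => Rpower (1 - u^2) a) u (-2 * a * u * phi a u).
Proof.
  intros hu. unfold phi, Rpower. auto_derive. nra.
  replace (1 + - (u * (u * 1))) with (1 - u^2) by ring. rewrite exp_shift by nra. field. nra.
Qed.

Lemma psi_le1 a z : 0 < a -> 0 < z <= 1 -> Rpower z a <= 1.
Proof.
  intros ha hz. unfold Rpower. rewrite <- exp_0. apply exp_le.
  assert (ln z <= 0) by (rewrite <- ln_1; apply ln_le; lra). nra.
Qed.

Theorem theorem2p1 (c alpha : R) (F : R -> R -> R)
  (hc : 0 < c) (halpha : 0 < alpha) (hF : C2_half F) :
  (* the defining improper integrals converge *)
  (forall x t, 0 <= t ->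
     exists l, is_impint (fun u => Rpower (1 - u ^ 2) (alpha - 1)
                                   * wave_sol c F x (u * t)) 0 1 l) /\
  (forall x t, 0 <= t ->
     exists l, is_impint (fun u => Rpower (1 - u ^ 2) (alpha - 1) * F x (u * t)) 0 1 l) /\
  (* initial conditions *)
  (forall x, epd_sol c alpha F x 0 = 0) /\
  (forall x, deriv_within half_line (fun s => epd_sol c alpha F x s) 0 0) /\
  (* the non-homogeneous Euler-Poisson-Darboux equation for t > 0 *)
  (exists vt vtt vx vxx : R -> R -> R,
     forall x t, 0 < t ->
       derivable_pt_lim (fun s => epd_sol c alpha F x s) t (vt x t) /\
       derivable_pt_lim (fun s => vt x s) t (vtt x t) /\
       derivable_pt_lim (fun y => epd_sol c alpha F y t) x (vx x t) /\
       derivable_pt_lim (fun y => vx y t) x (vxx x t) /\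
       vtt x t + 2 * alpha / t * vt x t =
         c ^ 2 * vxx x t
         + 2 / Beta alpha (1/2)
           * ImpInt (fun u => Rpower (1 - u ^ 2) (alpha - 1) * F x (u * t)) 0 1).
Proof.
  destruct hF as [F1 [F2 [F11 [F12 [F21 [F22 [HD [cF [cF1 _]]]]]]]]].
  set (Fe := fun x t => F x (Rmax t 0)).
  set (F1e := fun x t => F1 x (Rmax t 0)).
  assert (CF : C2 Fe) by (apply C2_ext; auto).
  assert (CF1 : C2 F1e) by (apply C2_ext; auto).
  assert (DF : DX Fe F1e).
  { intros z s. apply is_derive_Reals. apply (HD z (Rmax s 0) (Rmax_r s 0)). }
  assert (EF : forall y s, 0 <= s -> Fe y s = F y s).
  { intros y s hs. unfold Fe. rewrite Rmax_left by lra. auto. }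
  assert (ut0 : forall u t, 0 < u < 1 -> 0 <= t -> 0 <= u * t) by (intros; apply Rmult_le_pos; lra).
  set (k := 2 / Beta alpha (1/2)).
  set (V := fun x s => ImpInt (fun u => phi alpha u * W c Fe x (u * s)) 0 1).
  assert (IW : forall G x t, C2 G -> exists l, imp (fun u => phi alpha u * G x (u * t)) l).
  { intros G x t CG. destruct (imp_G alpha G x t (fun _ => 1) halpha CG) as [l Hl].
    intros; apply continuity_pt_const; intros ? ?; auto.
    exists l. eapply imp_ext; [|exact Hl]. intros u _. cbv beta. ring. }
  assert (Epd : forall x s, 0 <= s -> epd_sol c alpha F x s = k * V x s).
  { intros x s hs. unfold epd_sol, V, k. f_equal.
    apply ImpInt_ext. apply IW. apply CW; auto.
    intros u hu. unfold phi. rewrite (wave_eq c F Fe x (u * s)); auto. }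
  assert (C1 : forall u, 0 <= u <= 1 -> continuity_pt (fun _ : R => 1) u) by (intros; apply continuity_pt_const; intros ? ?; auto).
  assert (B1 : forall u, 0 <= u <= 1 -> Rabs 1 <= 1) by (intros; rewrite Rabs_R1; lra).
  assert (Cid : forall u, 0 <= u <= 1 -> continuity_pt (fun u : R => u) u) by (intros; apply continuity_pt_id).
  assert (Bid : forall u, 0 <= u <= 1 -> Rabs u <= 1) by (intros u hu; rewrite Rabs_right; lra).
  assert (DVt : forall x t, is_derive (V x) t (ImpInt (fun u => phi alpha u * (u * Wt c Fe x (u * t))) 0 1)).
  { intros x t. pose proof (E2 alpha (W c Fe) (Wt c Fe) x t (fun _ => 1) halpha (CW c Fe CF) (CWt c Fe CF) (fun x s => W_t c Fe hc CF x s) C1 B1) as D.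
    replace (V x) with (fun s => ImpInt (fun u => phi alpha u * (1 * W c Fe x (u * s))) 0 1).
    replace (fun u => phi alpha u * (u * Wt c Fe x (u * t))) with (fun u => phi alpha u * (1 * (u * Wt c Fe x (u * t)))).
    exact D.
    apply functional_extensionality; intro u; rewrite Rmult_1_l; reflexivity.
    apply functional_extensionality; intro s. unfold V. f_equal. apply functional_extensionality; intro u; rewrite Rmult_1_l; reflexivity. }
  set (vt := fun x t => k * ImpInt (fun u => phi alpha u * (u * Wt c Fe x (u * t))) 0 1).
  set (vtt := fun x t => k * ImpInt (fun u => phi alpha u * (u * (u * Wtt c Fe F1e x (u * t)))) 0 1).
  set (vx := fun x t => k * ImpInt (fun u => phi alpha u * Wx c Fe x (u * t)) 0 1).
  set (vxx := fun x t => k * ImpInt (fun u => phi alpha u * Wxx c F1e x (u * t)) 0 1).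
  split; [|split; [|split; [|split]]].
  - intros x t ht. destruct (IW (W c Fe) x t (CW c Fe CF)) as [l Hl]. exists l. apply imp_is.
    eapply imp_ext; [|exact Hl]. intros u hu. unfold phi. rewrite (wave_eq c F Fe x (u*t)); auto.
  - intros x t ht. destruct (IW Fe x t CF) as [l Hl]. exists l. apply imp_is.
    eapply imp_ext; [|exact Hl]. intros u hu. unfold phi. rewrite EF; auto.
  - intros x. rewrite Epd by lra. unfold V.
    rewrite (ImpInt_eq _ 0). ring. apply imp_zero_fun. intros u hu. replace (u * 0) with 0 by ring. rewrite W0. ring.
  - intros x eps he.
    assert (D0 : is_derive (V x) 0 0).
    { eapply isd_ext; [intros; reflexivity| |apply DVt]. apply ImpInt_eq. apply imp_zero_fun.
      intros u hu. replace (u * 0) with 0 by ring. rewrite Wt0. ring. }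
    apply is_derive_Reals in D0.
    assert (hk : 0 < Rabs k + 1) by (pose proof (Rabs_pos k); lra).
    destruct (D0 (eps / (Rabs k + 1))) as [d Hd]. apply Rdiv_lt_0_compat; auto.
    exists d. split. apply cond_pos. intros h hh hd hD. unfold half_line in hD.
    rewrite !Epd by lra.
    replace ((k * V x (0 + h) - k * V x 0) / h - 0) with (k * ((V x (0 + h) - V x 0) / h - 0)) by (field; auto).
    rewrite Rabs_mult. specialize (Hd h hh hd).
    assert (Rabs k * Rabs ((V x (0 + h) - V x 0) / h - 0) <= Rabs k * (eps / (Rabs k + 1))).
    { apply Rmult_le_compat_l. apply Rabs_pos. lra. }
    assert (E : (Rabs k + 1) * (eps / (Rabs k + 1)) = eps) by (field; lra).
    pose proof (Rabs_pos k).
    assert (0 < eps / (Rabs k + 1)) by (apply Rdiv_lt_0_compat; auto). nra.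
  - exists vt, vtt, vx, vxx. intros x t ht. split; [|split; [|split; [|split]]].
    + apply is_derive_Reals. apply is_derive_ext_loc with (fun s => k * V x s).
      apply (filter_imp (fun s => 0 < s)). intros s hs. symmetry. apply Epd. lra. apply loc_pos; auto.
      unfold vt. apply is_derive_scal. apply DVt.
    + apply is_derive_Reals. unfold vt, vtt. apply is_derive_scal.
      apply (E2 alpha (Wt c Fe) (Wtt c Fe F1e) x t (fun u => u) halpha (CWt c Fe CF) (CWtt c Fe F1e CF CF1) (fun x s => Wt_t c Fe F1e CF CF1 DF x s) Cid Bid).
    + apply is_derive_Reals. apply is_derive_ext with (fun y => k * V y t). intros y. symmetry. apply Epd; lra.
      unfold vx. apply is_derive_scal.
      apply (E3 alpha (W c Fe) (Wx c Fe) x t halpha (CW c Fe CF) (CWx c Fe CF) (fun x s => W_x c Fe CF x s)).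
    + apply is_derive_Reals. unfold vx, vxx. apply is_derive_scal.
      apply (E3 alpha (Wx c Fe) (Wxx c F1e) x t halpha (CWx c Fe CF) (CWxx c F1e CF1) (fun x s => Wx_x c Fe F1e CF CF1 DF x s)).
    + assert (Cg : forall G, C2 G -> forall u, continuity_pt (fun u => G x (u * t)) u) by (intros; apply cp_ut; auto).
      destruct (phig_imp alpha (fun u => u * (u * Wtt c Fe F1e x (u*t))) halpha) as [la Ha].
      { intros u hu. apply cp_mul. apply continuity_pt_id. apply cp_mul. apply continuity_pt_id. apply Cg. apply CWtt; auto. }
      destruct (phig_imp alpha (fun u => u * Wt c Fe x (u*t)) halpha) as [lb Hb].
      { intros u hu. apply cp_mul. apply continuity_pt_id. apply Cg. apply CWt; auto. }
      destruct (IW (Wxx c F1e) x t (CWxx c F1e CF1)) as [lc Hc].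
      destruct (IW Fe x t CF) as [ld Hd].
      destruct (IW (Wtt c Fe F1e) x t (CWtt c Fe F1e CF CF1)) as [le He].
      unfold vtt, vt, vxx. rewrite (ImpInt_eq _ _ Ha), (ImpInt_eq _ _ Hb), (ImpInt_eq _ _ Hc).
      replace (ImpInt (fun u => Rpower (1 - u ^ 2) (alpha - 1) * F x (u * t)) 0 1) with ld.
      2: { symmetry. apply ImpInt_eq. eapply imp_ext; [|exact Hd]. intros u hu. unfold phi. rewrite EF; auto. apply ut0; lra. }
      assert (i1 : le = c^2 * lc + 1 * ld).
      { apply (imp_unique (fun u => phi alpha u * Wtt c Fe F1e x (u*t))); auto.
        eapply imp_ext; [|exact (imp_lin _ _ _ _ (c^2) 1 Hc Hd)]. intros u hu. cbv beta. rewrite W_eq by auto. ring. }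
      assert (i2 : -2 * alpha * lb + t * (1 * le + -1 * la) = 0).
      { apply (imp_unique (fun u => (-2 * alpha) * (phi alpha u * (u * Wt c Fe x (u*t))) + t * (1 * (phi alpha u * Wtt c Fe F1e x (u*t)) + -1 * (phi alpha u * (u * (u * Wtt c Fe F1e x (u*t))))))).
        apply imp_lin; auto. apply imp_lin; auto.
        apply imp_zero with (G := fun u => Rpower (1 - u^2) alpha * Wt c Fe x (u*t)).
        - intros u hu.
          assert (Dh : is_derive (fun u => Wt c Fe x (u * t)) u (t * Wtt c Fe F1e x (u * t))).
          { apply (isd_comp (Wt c Fe x) (fun u => u * t) u). apply Wt_t; auto. auto_derive; auto. ring. }
          pose proof (is_derive_mult (K:=R_AbsRing) _ _ u _ _ (psi_der alpha u ltac:(lra)) Dh ltac:(intros; apply Rmult_comm)) as D.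
          eapply isd_ext. 3: exact D. intros; reflexivity.
          change (mult ?a ?b) with (a * b). change (plus ?a ?b) with (a + b).
          cbv beta. rewrite (psi_eq alpha (1 - u^2)) by nra. unfold phi. ring.
        - intros u hu. apply cp_c. apply cp_lin. apply cp_mul. apply c_cp. apply phi_cont; lra.
          apply cp_mul. apply continuity_pt_id. apply Cg. apply CWt; auto.
          apply cp_lin. apply cp_mul. apply c_cp. apply phi_cont; lra. apply Cg. apply CWtt; auto.
          apply cp_mul. apply c_cp. apply phi_cont; lra. apply cp_mul. apply continuity_pt_id.
          apply cp_mul. apply continuity_pt_id. apply Cg. apply CWtt; auto.
        - intros eps he.
          destruct (continuity_ab_maj (fun u => Rabs (Wt c Fe x (u * t))) 0 1 ltac:(lra)) as [Mx [HM _]].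
          { intros u hu. apply continuity_pt_comp with (f1 := fun u => Wt c Fe x (u * t)) (f2 := Rabs). apply Cg. apply CWt; auto. apply Rcontinuity_abs. }
          set (M := Rabs (Wt c Fe x (Mx * t))). assert (hM : 0 <= M) by apply Rabs_pos.
          destruct (Rpow_small alpha halpha (eps / (M + 1))) as [d [hd D]]. apply Rdiv_lt_0_compat; lra.
          exists (Rmin (d/2) (1/2)). split. apply Rmin_pos; lra. intros q hq.
          pose proof (Rmin_l (d/2) (1/2)). pose proof (Rmin_r (d/2) (1/2)).
          assert (hz : 0 < 1 - q^2 < d) by (split; nra).
          specialize (D _ hz). assert (HMq : Rabs (Wt c Fe x (q * t)) <= M) by (apply (HM q); lra).
          rewrite Rabs_mult. rewrite (Rabs_right (Rpower _ _)) by (left; unfold Rpower; apply exp_pos).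
          assert (0 < Rpower (1 - q ^ 2) alpha) by (unfold Rpower; apply exp_pos).
          assert (Rpower (1 - q ^ 2) alpha * Rabs (Wt c Fe x (q * t)) <= eps / (M + 1) * M).
          { pose proof (Rabs_pos (Wt c Fe x (q * t))). apply Rmult_le_compat; lra. }
          assert (eps / (M + 1) * M < eps).
          { apply (Rmult_lt_reg_r (M + 1)). lra. field_simplify; nra. }
          lra.
        - intros eps he.
          assert (C0 : continuity_pt (fun u => Wt c Fe x (u * t)) 0) by (apply Cg; apply CWt; auto).
          destruct (cp_eps _ _ C0 eps he) as [d [hd D]].
          exists (Rmin d (1/2)). split. apply Rmin_pos; lra. intros p hp.
          pose proof (Rmin_l d (1/2)). pose proof (Rmin_r d (1/2)).
          specialize (D p ltac:(rewrite Rminus_0_r, Rabs_right; lra)).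
          replace (0 * t) with 0 in D by ring. rewrite Wt0, Rminus_0_r in D.
          rewrite Rabs_mult. rewrite (Rabs_right (Rpower _ _)) by (left; unfold Rpower; apply exp_pos).
          assert (Rpower (1 - p ^ 2) alpha <= 1) by (apply psi_le1; auto; split; nra).
          assert (0 < Rpower (1 - p ^ 2) alpha) by (unfold Rpower; apply exp_pos).
          pose proof (Rabs_pos (Wt c Fe x (p * t))). nra. }
      clearbody k. 
      assert (E : t * la = t * le - 2 * alpha * lb) by lra.
      replace la with ((t * la) / t) by (field; lra). rewrite E, i1. field. lra.
Qed.
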